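(* Let $k$ be a positive integer and $f$ a function. Let $G_1,\dots,G_p$ be graphs such that each $G_i$ has $n_i$ vertices, contains at most $f(k)\cdot n_i^2$ cliques, and contains no clique of size $k$. Let $G$ be an $n$-vertex graph obtained by $(\le k)$-sums of $G_1,\dots,G_p$. Then for some function $f'$ depending on $f$ and $k$, $G$ contains at most $f'(k)\cdot n^2$ cliques.
   Context: Graphs are simple, finite and undirected. A clique is a set of pairwise adjacent vertices (the empty set and single vertices count). $k$-sum: let $G_1,G_2$ be graphs with disjoint vertex sets and, for $i=1,2$, let $W_i\subseteq V(G_i)$ be a clique of size $k$ in $G_i$. Let $G_i'$ be obtained from $G_i$ by deleting some (possibly no) edges with both endpoints in $W_i$. For a bijection $\phi:W_1\to W_2$, a $k$-sum of $G_1$ and $G_2$ is the graph obtained from the union of $G_1'$ and $G_2'$ by identifying $w$ with $\phi(w)$ for all $w\in W_1$. A $(\le k)$-sum is a $k'$-sum for some $k'\le k$. A graph is obtained by $(\le k)$-sums of $G_1,\dots,G_p$ if it arises from these graphs by repeatedly taking $(\le k)$-sums of graphs already obtained (each $G_i$ being used once), i.e. via a binary tree whose leaves are $G_1,\dots,G_p$ and each internal node is a $(\le k)$-sum of its two children. *)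

(* Defs.v *)
From mathcomp Require Import all_boot.
Set Implicit Arguments. Unset Strict Implicit. Unset Printing Implicit Defensive.

Record sgraph := SGraph {
  vert : finType;
  adj : rel vert;
  adj_sym : symmetric adj;
  adj_irr : irreflexive adj }.

(* Cliques (the empty set and singletons count). *)
Definition is_clique (G : sgraph) (Q : {set vert G}) : bool :=
  [forall x in Q, forall y in Q, (x != y) ==> adj x y].

Definition num_cliques (G : sgraph) : nat := #|[set Q : {set vert G} | is_clique Q]|.

Definition has_clique_of_size (G : sgraph) (k : nat) : Prop :=
  exists Q : {set vert G}, is_clique Q /\ #|Q| = k.

(* G is a (<= k)-sum of H1 and H2: i1, i2 embed the vertex sets of H1, H2
   into V(G), covering V(G); they overlap exactly on the identified cliques
   W1 (in H1) and W2 (in H2) of common size <= k (the bijection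
   phi : W1 -> W2 is a <-> i2^-1 (i1 a)); e1, e2 are H1, H2 with some edges
   inside W1, W2 deleted; and E(G) is the union of the images of e1 and e2. *)
Definition overlap (A B C : finType) (i1 : A -> C) (i2 : B -> C) : {set A} :=
  [set a | i1 a \in codom i2].

Definition is_sum (k : nat) (H1 H2 G : sgraph) : Prop :=
  exists (i1 : vert H1 -> vert G) (i2 : vert H2 -> vert G)
         (e1 : rel (vert H1)) (e2 : rel (vert H2)),
  [/\ injective i1 /\ injective i2,
      (forall v, (v \in codom i1) || (v \in codom i2)),
      #|overlap i1 i2| <= k /\
      is_clique (overlap i1 i2) /\ is_clique (overlap i2 i1),
      (symmetric e1 /\
       (forall a b, e1 a b -> adj a b) /\
       (forall a b, ~~ ((a \in overlap i1 i2) && (b \in overlap i1 i2)) ->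
                    e1 a b = adj a b)) /\
      (symmetric e2 /\
       (forall a b, e2 a b -> adj a b) /\
       (forall a b, ~~ ((a \in overlap i2 i1) && (b \in overlap i2 i1)) ->
                    e2 a b = adj a b)) &
      (forall u v, adj u v =
         [exists a, exists b, [&& i1 a == u, i1 b == v & e1 a b]] ||
         [exists a, exists b, [&& i2 a == u, i2 b == v & e2 a b]])].

(* G is obtained by (<= k)-sums of the graphs Gs i, i in A, each used once,
   along a binary tree (up to isomorphism). *)
Inductive obtained (k p : nat) (Gs : 'I_p -> sgraph) : {set 'I_p} -> sgraph -> Prop :=
| ob_leaf (i : 'I_p) (G : sgraph) (phi : vert (Gs i) -> vert G) :
    bijective phi -> (forall a b, adj (phi a) (phi b) = adj a b) ->
    obtained k Gs [set i] G
| ob_node (A1 A2 : {set 'I_p}) (G1 G2 G : sgraph) :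
    [disjoint A1 & A2] -> obtained k Gs A1 G1 -> obtained k Gs A2 G2 ->
    is_sum k G1 G2 G -> obtained k Gs (A1 :|: A2) G.

(* Main.v *)
Require Import Defs.
From mathcomp Require Import all_boot.
From mathcomp Require Import zify.

Lemma cliques_le_pow (G : sgraph) : num_cliques G <= 2 ^ #|vert G|.
Proof.
rewrite /num_cliques -cardsT -card_powerset.
apply: subset_leq_card; apply/subsetP => Q _.
by rewrite inE; apply/subsetP => x _; rewrite inE.
Qed.

Lemma count_side (G H : sgraph) (i : vert H -> vert G) (S : {set {set vert G}}) :
  (forall Q, Q \in S -> (Q \subset codom i) /\ is_clique (i @^-1: Q)) ->
  #|S| <= num_cliques H.
Proof.
move=> hS.
have <- : #|[set i @^-1: Q | Q : {set vert G} in S]| = #|S|.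
  apply: card_in_imset => Q1 Q2 h1 h2 e.
  have [s1 _] := hS _ h1; have [s2 _] := hS _ h2.
  apply/setP => x; apply/idP/idP => hx.
  - move/subsetP: s1 => /(_ _ hx) /codomP [a ea]; subst x.
    have : a \in i @^-1: Q1 by rewrite inE.
    by rewrite e inE.
  - move/subsetP: s2 => /(_ _ hx) /codomP [a ea]; subst x.
    have : a \in i @^-1: Q2 by rewrite inE.
    by rewrite -e inE.
apply: subset_leq_card; apply/subsetP => R /imsetP [Q hQ ->].
by rewrite inE; case: (hS _ hQ).
Qed.

Lemma side_clique (G H : sgraph) (B : finType) (i : vert H -> vert G) (j : B -> vert G)
  (e : rel (vert H)) (Q : {set vert G}) :
  injective i -> (forall a b, e a b -> adj a b) -> is_clique (overlap i j) ->
  (forall u v, adj u v ->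
     [exists a, exists b, [&& i a == u, i b == v & e a b]] ||
     [exists a, exists b, [&& j a == u & j b == v]]) ->
  is_clique Q -> is_clique (i @^-1: Q).
Proof.
move=> inj he hov hadj hQ.
apply/forallP => a; apply/implyP => ha; apply/forallP => b; apply/implyP => hb.
apply/implyP => nab.
rewrite inE in ha; rewrite inE in hb.
have nuv : i a != i b by apply: contra nab => /eqP /inj ->.
have : adj (i a) (i b).
  by move/forallP: hQ => /(_ (i a)) /implyP /(_ ha) /forallP /(_ (i b)) /implyP /(_ hb) /implyP /(_ nuv).
move/hadj => /orP [/existsP [a' /existsP [b' /and3P [/eqP /inj -> /eqP /inj -> ]]]|].
  exact: he.
move/existsP => [a' /existsP [b' /andP [/eqP ea /eqP eb]]].
have oa : a \in overlap i j by rewrite inE -ea codom_f.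
have ob : b \in overlap i j by rewrite inE -eb codom_f.
by move/forallP: hov => /(_ a) /implyP /(_ oa) /forallP /(_ b) /implyP /(_ ob) /implyP /(_ nab).
Qed.

Lemma sum_facts k (H1 H2 G : sgraph) : is_sum k H1 H2 G ->
  [/\ #|vert H1| + #|vert H2| <= #|vert G| + k,
      num_cliques G <= num_cliques H1 + num_cliques H2,
      (#|vert H1| = #|vert G| -> num_cliques G <= num_cliques H1) &
      (#|vert H2| = #|vert G| -> num_cliques G <= num_cliques H2)].
Proof.
move=> [i1 [i2 [e1 [e2 H]]]].
case: H => [[inj1 inj2] cov [hk [hc1 hc2]] [[_ [he1 _]] [_ [he2 _]]] hadj].
have pc1 : forall Q, is_clique Q -> is_clique (i1 @^-1: Q).
  move=> Q; apply: (@side_clique G H1 _ i1 i2 e1) => // u v /[dup] huv.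
  rewrite hadj => /orP [->//|/existsP [a /existsP [b /and3P [ea eb _]]]].
  by apply/orP; right; apply/existsP; exists a; apply/existsP; exists b; rewrite ea eb.
have pc2 : forall Q, is_clique Q -> is_clique (i2 @^-1: Q).
  move=> Q; apply: (@side_clique G H2 _ i2 i1 e2) => // u v /[dup] huv.
  rewrite hadj => /orP [/existsP [a /existsP [b /and3P [ea eb _]]]|->]; last by [].
  by apply/orP; right; apply/existsP; exists a; apply/existsP; exists b; rewrite ea eb.
have split : forall Q : {set vert G}, is_clique Q -> (Q \subset codom i1) || (Q \subset codom i2).
  move=> Q hQ; apply/negPn/negP; rewrite negb_or => /andP [/subsetPn [u hu nu] /subsetPn [v hv nv]].
  have cu : u \in codom i2 by move: (cov u); rewrite (negbTE nu).
  have nuv : u != v by apply: contraNneq nv => <-.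
  have : adj u v.
    by move/forallP: hQ => /(_ u) /implyP /(_ hu) /forallP /(_ v) /implyP /(_ hv) /implyP /(_ nuv).
  rewrite hadj => /orP [/existsP [a /existsP [b /and3P [/eqP ea _ _]]]|/existsP [a /existsP [b /and3P [_ /eqP eb _]]]].
    by move: nu; rewrite -ea codom_f.
  by move: nv; rewrite -eb codom_f.
set S1 := [set Q : {set vert G} | is_clique Q && (Q \subset codom i1)].
set S2 := [set Q : {set vert G} | is_clique Q && (Q \subset codom i2)].
have c1 : #|S1| <= num_cliques H1.
  by apply: (@count_side G H1 i1) => Q; rewrite inE => /andP [hQ hs]; split => //; apply: pc1.
have c2 : #|S2| <= num_cliques H2.
  by apply: (@count_side G H2 i2) => Q; rewrite inE => /andP [hQ hs]; split => //; apply: pc2.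
set A1 := [set u | u \in codom i1].
set A2 := [set u | u \in codom i2].
have cA1 : #|A1| = #|vert H1| by rewrite cardsE card_codom.
have cA2 : #|A2| = #|vert H2| by rewrite cardsE card_codom.
have full : forall (A : {set vert G}), #|A| = #|vert G| -> forall u, u \in A.
  move=> A hA u; have : A == setT by rewrite eqEcard subsetT /= cardsT hA.
  by move/eqP ->; rewrite inE.
split.
- have hU : A1 :|: A2 = setT by apply/setP => u; rewrite !inE cov.
  have hI : A1 :&: A2 \subset i1 @: overlap i1 i2.
    apply/subsetP => u; rewrite !inE => /andP [/codomP [a ->] h2].
    by apply: imset_f; rewrite inE.
  have hs : #|A1 :&: A2| <= k.
    apply: leq_trans (subset_leq_card hI) _.
    by apply: leq_trans (leq_imset_card _ _) _.
  have hs2 : #|A1 :&: A2| <= #|A1| by apply: subset_leq_card; apply: subsetIl.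
  have := cardsU A1 A2; rewrite hU cardsT.
  move: hs hs2; rewrite cA1 cA2; lia.
- apply: leq_trans (leq_add c1 c2).
  apply: leq_trans (leq_card_setU S1 S2).
  apply: subset_leq_card; apply/subsetP => Q; rewrite !inE => hQ.
  by rewrite hQ /=; apply: split.
- move=> h; rewrite -cA1 in h; apply: leq_trans c1.
  apply: subset_leq_card; apply/subsetP => Q; rewrite !inE => hQ.
  rewrite hQ /=; apply/subsetP => u _; by have := full _ h u; rewrite inE.
- move=> h; rewrite -cA2 in h; apply: leq_trans c2.
  apply: subset_leq_card; apply/subsetP => Q; rewrite !inE => hQ.
  rewrite hQ /=; apply/subsetP => u _; by have := full _ h u; rewrite inE.
Qed.

Lemma sum_le k (H1 H2 G : sgraph) : is_sum k H1 H2 G ->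
  #|vert H1| <= #|vert G| /\ #|vert H2| <= #|vert G|.
Proof.
move=> [i1 [i2 [e1 [e2 H]]]].
case: H => [[inj1 inj2] _ _ _ _].
by split; [exact: (leq_card _ inj1) | exact: (leq_card _ inj2)].
Qed.

Lemma arith_ge c k a b n N N1 N2 : 2 ^ (2 * k) <= c ->
  N1 <= c * a ^ 2 -> N2 <= c * b ^ 2 -> N2 <= 2 ^ b ->
  a + b <= n + k -> N <= N1 + N2 -> a < n -> b <= a -> N <= c * n ^ 2.
Proof.
move=> hc h1 h2 h2' hab hN an ba.
case: (leqP b (2 * k)) => hb.
- have : N2 <= c by apply: leq_trans h2' (leq_trans (leq_pexp2l _ hb) hc).
  move=> h3.
  apply: (leq_trans hN); apply: leq_trans (leq_add h1 h3) _.
  have : a ^ 2 + 1 <= n ^ 2 by nia.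
  move=> h4; rewrite -{2}(muln1 c) -mulnDr; exact: leq_mul (leqnn c) h4.
- have : a ^ 2 + b ^ 2 <= n ^ 2 by nia.
  move=> h4; apply: (leq_trans hN); apply: leq_trans (leq_add h1 h2) _.
  by rewrite -mulnDr leq_mul2l h4 orbT.
Qed.

Lemma arith c k a b n N N1 N2 : 2 ^ (2 * k) <= c ->
  N1 <= c * a ^ 2 -> N2 <= c * b ^ 2 -> N1 <= 2 ^ a -> N2 <= 2 ^ b ->
  a + b <= n + k -> N <= N1 + N2 -> a < n -> b < n -> N <= c * n ^ 2.
Proof.
move=> hc h1 h2 h1' h2' hab hN an bn.
case: (leqP b a) => ba.
- exact: (@arith_ge c k a b n N N1 N2 hc h1 h2 h2' hab hN an ba).
- apply: (@arith_ge c k b a n N N2 N1 hc h2 h1 h1') => //; first by rewrite addnC.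
  + by rewrite addnC.
  + exact: ltnW.
Qed.

Theorem lemma11 (k : nat) (f : nat -> nat) :
  0 < k ->
  exists C : nat,
    forall (p : nat) (Gs : 'I_p -> sgraph) (G : sgraph),
      (forall i, num_cliques (Gs i) <= f k * #|vert (Gs i)| ^ 2) ->
      (forall i, ~ has_clique_of_size (Gs i) k) ->
      obtained k Gs [set: 'I_p] G ->
      num_cliques G <= C * #|vert G| ^ 2.
Proof.
move=> _; exists (2 ^ (2 * k) + f k) => p Gs G hf _ hob.
set c := 2 ^ (2 * k) + f k.
have hc : 2 ^ (2 * k) <= c by apply: leq_addr.
elim: hob => {G}.
- move=> i G phi [g phig gphi] hadj.
  have : num_cliques G <= num_cliques (Gs i).
    rewrite {1}/num_cliques; apply: (@count_side G (Gs i) phi) => Q.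
    rewrite inE => hQ; split.
      by apply/subsetP => u _; rewrite -(gphi u) codom_f.
    apply/forallP => a; apply/implyP => ha; apply/forallP => b; apply/implyP => hb.
    apply/implyP => nab; rewrite inE in ha; rewrite inE in hb.
    have nuv : phi a != phi b by apply: contra nab => /eqP /(can_inj phig) ->.
    rewrite -hadj.
    by move/forallP: hQ => /(_ _) /implyP /(_ ha) /forallP /(_ _) /implyP /(_ hb) /implyP /(_ nuv).
  move=> h; apply: (leq_trans h); apply: (leq_trans (hf i)).
  apply: leq_mul; first exact: leq_addl.
  rewrite leq_exp2r //.
  exact: (leq_card _ (can_inj phig)).
- move=> A1 A2 G1 G2 G _ _ IH1 _ IH2 hs.
  have [hsz hN h1 h2] := @sum_facts k G1 G2 G hs.
  have [l1 l2] := @sum_le k G1 G2 G hs.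
  case: (ltngtP #|vert G1| #|vert G|) => [lt1||e1]; last first.
  + by apply: leq_trans (h1 e1) _; rewrite -e1.
  + by move=> g; move: l1; rewrite leqNgt g.
  case: (ltngtP #|vert G2| #|vert G|) => [lt2||e2]; last first.
  + by apply: leq_trans (h2 e2) _; rewrite -e2.
  + by move=> g; move: l2; rewrite leqNgt g.
  exact: (arith _ _ _ _ _ _ _ _ hc IH1 IH2 (cliques_le_pow _) (cliques_le_pow _) hsz hN lt1 lt2).
Qed.
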